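(* For every positive integer $t$ there exists an integer $N_t$ such that the following holds. Let $G$ be a finite group (not necessarily abelian, written additively) such that the smallest prime divisor $p$ of $|G|$ satisfies $p>t$. Let $M=[a_1^{\lambda_1},\dots,a_n^{\lambda_n}]$ be a multiset of non-identity elements of $G$, where $a_1,\dots,a_n$ are distinct, $\lambda_i\ge1$, and $n\ge N_t$. Then $M$ is $t$-weakly sequenceable.
   Context: $[a_1^{\lambda_1},\dots,a_n^{\lambda_n}]$ denotes the multiset containing $a_i$ with multiplicity $\lambda_i$; its underlying set is $\{a_1,\dots,a_n\}$. A multiset $M$ of size $m$ is $t$-weakly sequenceable if there is a sequence $(y_1,\dots,y_m)$ in which each element of $M$ appears exactly as many times as its multiplicity, such that the partial sums $s_0=0$, $s_i=y_1+\dots+y_i$ (summed left to right) satisfy $s_i\ne s_j$ whenever $0\le i<j\le m$ and $j-i\le t$. *)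

(* Defs.v *)
(* The group is written multiplicatively (MathComp's finGroupType);
   the paper's additive notation "+" is our "*", and 0 is our 1. *)
From mathcomp Require Import all_boot all_fingroup.
Set Implicit Arguments. Unset Strict Implicit. Unset Printing Implicit Defensive.
Local Open Scope group_scope.

Definition mset_of (gT : finGroupType) (a : seq gT) (lam : seq nat) : seq gT :=
  flatten [seq nseq l.2 l.1 | l <- zip a lam].

Definition psum (gT : finGroupType) (y : seq gT) (i : nat) : gT :=
  \prod_(x <- take i y) x.

Definition t_weakly_sequenceable (gT : finGroupType) (t : nat) (M : seq gT) : Prop :=
  exists y : seq gT, perm_eq y M /\
    forall i j : nat, (i < j)%N -> (j <= size y)%N -> (j - i <= t)%N ->
      psum y i != psum y j.

(* Main.v *)
Require Import Defs.
From mathcomp Require Import all_boot all_fingroup all_solvable zify.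
Set Implicit Arguments. Unset Strict Implicit. Unset Printing Implicit Defensive.
Local Open Scope group_scope.

Ltac cset := repeat match goal with |- context [count ?p ?s] =>
  let c := fresh "c" in set c := count p s end.

Section Seqs.
Variable gT : finGroupType.
Variable t : nat.

Definition prd (s : seq gT) : gT := \prod_(z <- s) z.

Definition valid (s : seq gT) : Prop :=
  forall i k, (0 < k)%N -> (k <= t)%N -> (i + k <= size s)%N ->
    prd (take k (drop i s)) != 1.

Definition cross (U V : seq gT) : Prop :=
  forall k j, (0 < k)%N -> (0 < j)%N -> (k + j <= t)%N -> (k <= size U)%N ->
    (j <= size V)%N -> prd (drop (size U - k) U) * prd (take j V) != 1.

Lemma prd_cat s1 s2 : prd (s1 ++ s2) = prd s1 * prd s2.
Proof. by rewrite /prd big_cat. Qed.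
Lemma prd_nil : prd [::] = 1. Proof. by rewrite /prd big_nil. Qed.
Lemma prd_cons x s : prd (x :: s) = x * prd s. Proof. by rewrite /prd big_cons. Qed.
Lemma prd_nseq n x : prd (nseq n x) = x ^+ n.
Proof.
elim: n => [|n IH]; first by rewrite prd_nil expg0.
by rewrite /= prd_cons IH expgS.
Qed.

Lemma drop_catl n (s1 s2 : seq gT) :
  (n <= size s1)%N -> drop n (s1 ++ s2) = drop n s1 ++ s2.
Proof.
move=> h; rewrite drop_cat; case: ltnP => // h2.
have -> : n = size s1 by apply/eqP; rewrite eqn_leq h h2.
by rewrite subnn drop0 drop_size.
Qed.

Lemma drop_catr n (s1 s2 : seq gT) :
  (size s1 <= n)%N -> drop n (s1 ++ s2) = drop (n - size s1) s2.
Proof. by move=> h; rewrite drop_cat ltnNge h. Qed.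

Lemma drop_addl n (s1 s2 : seq gT) : drop (size s1 + n) (s1 ++ s2) = drop n s2.
Proof. by rewrite drop_catr ?leq_addr // addKn. Qed.

Lemma valid_cat U V : valid (U ++ V) <-> [/\ valid U, valid V & cross U V].
Proof.
split.
- move=> h; split.
  + move=> i k k0 kt ik.
    have := h i k k0 kt; rewrite size_cat => /(_ (leq_trans ik (leq_addr _ _))).
    rewrite drop_catl; last lia.
    by rewrite takel_cat // size_drop; lia.
  + move=> i k k0 kt ik.
    have := h (size U + i) k k0 kt; rewrite size_cat.
    rewrite drop_catr ?leq_addr // addKn; apply; lia.
  + move=> k j k0 j0 kj kU jV.
    have := h (size U - k) (k + j) ltac:(lia) kj.
    rewrite drop_catl ?leq_subr // take_cat size_drop subKn //.
    rewrite ltnNge leq_addr /= addKn prd_cat size_cat; apply; lia.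
- case=> hU hV hc i k k0 kt; rewrite size_cat => ik.
  case: (leqP (i + k) (size U)) => h1.
    rewrite drop_catl; last lia.
    by rewrite takel_cat ?size_drop; [exact: hU | lia].
  case: (leqP (size U) i) => h2.
    rewrite drop_catr //; apply: hV => //; lia.
  rewrite drop_catl; last lia.
  rewrite take_cat size_drop ifN; last by rewrite -leqNgt; lia.
  have e : drop i U = drop (size U - (size U - i)) U by rewrite subKn // ltnW.
  rewrite prd_cat e; apply: hc; lia.
Qed.


Lemma cross_suf U U' V : (t.-1 <= size U)%N -> (t.-1 <= size U')%N ->
  drop (size U - t.-1) U = drop (size U' - t.-1) U' -> cross U V -> cross U' V.
Proof.
move=> hU hU' e hc k j k0 j0 kj kU jV.
have e1 : forall W : seq gT, (t.-1 <= size W)%N ->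
   drop (size W - k) W = drop (t.-1 - k) (drop (size W - t.-1) W).
  move=> W hW; rewrite drop_drop; congr drop; lia.
rewrite e1 // -e -e1 //; apply: hc => //; lia.
Qed.

Lemma cross_pre U V V' : (t.-1 <= size V)%N -> (t.-1 <= size V')%N ->
  take t.-1 V = take t.-1 V' -> cross U V -> cross U V'.
Proof.
move=> hV hV' e hc k j k0 j0 kj kU jV.
have e1 : forall W : seq gT, take j W = take j (take t.-1 W).
  by move=> W; rewrite take_takel //; lia.
rewrite e1 -e -e1; apply: hc => //; lia.
Qed.

Lemma valid_replace L M M' R : valid (L ++ M ++ R) -> valid M' ->
  (t.-1 <= size M)%N -> (t.-1 <= size M')%N ->
  take t.-1 M = take t.-1 M' ->
  drop (size M - t.-1) M = drop (size M' - t.-1) M' ->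
  valid (L ++ M' ++ R).
Proof.
move=> /valid_cat [hL /valid_cat [hM hR hMR] hLMR] hM' s1 s2 et ed.
apply/valid_cat; split => //.
  apply/valid_cat; split => //; exact: cross_suf ed hMR.
apply: cross_pre hLMR; rewrite ?size_cat; try lia.
by rewrite !takel_cat.
Qed.

Definition badv (s : seq gT) : seq gT :=
  [seq (prd (drop (size s - k) s))^-1 | k <- iota 0 t].

Lemma size_badv s : size (badv s) = t.
Proof. by rewrite size_map size_iota. Qed.

Lemma valid_rcons s y : (0 < t)%N -> valid s -> y \notin badv s -> valid (s ++ [:: y]).
Proof.
move=> t0 hs hy; apply/valid_cat; split => //.
  move=> i k k0 kt /= ik.
  have -> : i = 0%N by lia.
  have -> : k = 1%N by lia.
  rewrite /= prd_cons prd_nil mulg1; apply: contra hy => /eqP ->.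
  apply/mapP; exists 0%N; first by rewrite mem_iota; lia.
  by rewrite subn0 drop_size prd_nil invg1.
move=> k j k0 j0 kj kU /= jV.
have -> : j = 1%N by lia.
rewrite /= prd_cons prd_nil mulg1; apply: contra hy => /eqP h.
apply/mapP; exists k; first by rewrite mem_iota; lia.
by rewrite -[y](mulKg (prd (drop (size s - k) s))) h mulg1.
Qed.

Lemma valid_nseq c (x : gT) : (forall v, (0 < v)%N -> (v <= t)%N -> x ^+ v != 1) ->
  valid (nseq c x).
Proof.
move=> hx i k k0 kt ik; rewrite drop_nseq take_nseq ?prd_nseq ?hx //.
rewrite size_nseq in ik; lia.
Qed.


Lemma mul_eq1l (a b : gT) : a * b = 1 -> a = b^-1.
Proof. by move=> h; rewrite -[a](mulgK b) h mul1g. Qed.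
Lemma mul_eq1r (a b : gT) : a * b = 1 -> b = a^-1.
Proof. by move=> h; rewrite -[b](mulKg a) h mulg1. Qed.
Lemma mul3_eq1 (q y p : gT) : q * y * p = 1 -> p * q = y^-1.
Proof.
move=> /mul_eq1l h; have -> : y = q^-1 * p^-1 by rewrite -h mulKg.
by rewrite invMg !invgK.
Qed.

Definition inC (z : gT) (g : seq gT * seq gT) : bool :=
  has (fun j => has (fun k => (0 < j + k)%N &&
     (prd (take j g.2) * prd (drop (size g.1 - k) g.1) == z)) (iota 0 t)) (iota 0 t).

Definition good (x : gT) (g : seq gT * seq gT) : bool :=
  all (fun v => ~~ inC (x ^+ v)^-1 g) (iota 1 t).

Lemma inC_intro z g j k : (0 < j + k)%N -> (j < t)%N -> (k < t)%N ->
  prd (take j g.2) * prd (drop (size g.1 - k) g.1) = z -> inC z g.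
Proof.
move=> h1 h2 h3 h4; apply/hasP; exists j; first by rewrite mem_iota; lia.
apply/hasP; exists k; first by rewrite mem_iota; lia.
by rewrite h1 h4 eqxx.
Qed.

Lemma good_inC x g v : good x g -> (0 < v)%N -> (v <= t)%N -> ~~ inC (x ^+ v)^-1 g.
Proof. by move=> /allP h v0 vt; apply: h; rewrite mem_iota; lia. Qed.

Lemma good_valid A B c x : size A = t -> size B = t -> valid A -> valid B ->
  (0 < c)%N -> (forall v, (0 < v)%N -> (v <= t)%N -> x ^+ v != 1) ->
  good x (A, B) -> valid (A ++ nseq c x ++ B).
Proof.
move=> sA sB hA hB c0 hx hg; rewrite catA; apply/valid_cat; split => //.
  apply/valid_cat; split => //; first exact: valid_nseq.
  move=> k j k0 j0 kj kA; rewrite size_nseq => jX.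
  rewrite take_nseq // prd_nseq; apply/negP => /eqP /mul_eq1l h.
  have jt : (j <= t)%N by lia.
  have hin : inC (x ^+ j)^-1 (A, B).
    apply: (inC_intro (j := 0) (k := k)) => //=; try lia.
    by rewrite take0 prd_nil mul1g.
  by move: (good_inC hg j0 jt); rewrite hin.
move=> k j k0 j0 kj; rewrite size_cat size_nseq => kAX jB.
case: (leqP k c) => hk.
  rewrite drop_catr; last lia.
  rewrite drop_nseq.
  have -> : (c - (size A + c - k - size A) = k)%N by lia.
  rewrite prd_nseq; apply/negP => /eqP /mul_eq1r h.
  have kt : (k <= t)%N by lia.
  have hin : inC (x ^+ k)^-1 (A, B).
    apply: (inC_intro (j := j) (k := 0)) => //=; try lia.
    by rewrite subn0 drop_size prd_nil mulg1.
  by move: (good_inC hg k0 kt); rewrite hin.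
rewrite drop_catl; last lia.
have -> : (size A + c - k = size A - (k - c))%N by lia.
rewrite prd_cat prd_nseq; apply/negP => /eqP /mul3_eq1 h.
have ct : (c <= t)%N by lia.
have hin : inC (x ^+ c)^-1 (A, B).
  by apply: (inC_intro (j := j) (k := k - c)) => //=; lia.
by move: (good_inC hg c0 ct); rewrite hin.
Qed.


Definition gcat (g : seq gT * seq gT) : seq gT := g.1 ++ g.2.

Definition xok (x : gT) := forall v, (0 < v)%N -> (v <= t)%N -> x ^+ v != 1.

Lemma phase3 (cnt : gT -> nat) gs : forall ls Pre R,
  (forall x, x \in ls -> (0 < cnt x)%N /\ xok x) ->
  all (fun g => (size g.1 == t) && (size g.2 == t)) gs ->
  ((\sum_(x <- ls) count (fun g => ~~ good x g) gs) + size ls <= size gs)%N ->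
  valid (Pre ++ flatten (map gcat gs) ++ R) ->
  exists F, valid (Pre ++ F ++ R) /\
    perm_eq F (flatten (map gcat gs) ++ flatten [seq nseq (cnt x) x | x <- ls]).
Proof.
elim: gs => [|g gs IH] ls Pre R hls hsz hsum hv.
  case: ls hls hsum => [|x ls] hls hsum; last by move: hsum => /=; lia.
  by exists [::].
have [ls0|lsn] := eqVneq ls [::].
  by exists (flatten (map gcat (g :: gs))); split => //; rewrite ls0 /= cats0.
move: hsz => /= /andP [/andP [/eqP s1 /eqP s2] hsz].
move: hv; rewrite /= -catA => hv.
have [hg1 hg2] : valid g.1 /\ valid g.2.
  move: hv => /valid_cat [_ /valid_cat [/valid_cat [] ]] //.
have hsplit : forall ls',
   (\sum_(x <- ls') count (fun g0 => ~~ good x g0) (g :: gs) =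
    \sum_(x <- ls') (~~ good x g : nat) + \sum_(x <- ls') count (fun g0 => ~~ good x g0) gs)%N.
  by move=> ls'; rewrite -big_split.
case: (boolP (has (fun x => good x g) ls)) => [/hasP [x xin gx] | hno].
  set X := nseq (cnt x) x.
  have [cx xx] := hls x xin.
  have hv' : valid (Pre ++ (g.1 ++ X ++ g.2) ++ (flatten (map gcat gs) ++ R)).
    apply: (valid_replace hv).
    - by apply: good_valid => //; case: g gx {hv hsplit s1 s2 hg1 hg2}.
    - rewrite size_cat; lia.
    - rewrite !size_cat; lia.
    - by rewrite !takel_cat //; lia.
    - rewrite !size_cat.
      have -> : (size g.1 + size g.2 - t.-1 = size g.1 + (size g.2 - t.-1))%N by lia.
      have -> : (size g.1 + (size X + size g.2) - t.-1 = size g.1 + size X + (size g.2 - t.-1))%N by lia.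
      rewrite catA -(size_cat g.1 X) !drop_addl //.
  have hperm := perm_to_rem xin.
  have hv2 : valid ((Pre ++ (g.1 ++ X ++ g.2)) ++ flatten (map gcat gs) ++ R).
    by rewrite -catA.
  have hs2 : ((\sum_(y <- rem x ls) count (fun g0 => ~~ good y g0) gs) + size (rem x ls) <= size gs)%N.
    have e2 : (\sum_(y <- ls) count (fun g0 => ~~ good y g0) gs =
       count (fun g0 => ~~ good x g0) gs +
       \sum_(y <- rem x ls) count (fun g0 => ~~ good y g0) gs)%N.
      by rewrite (perm_big _ hperm) big_cons.
    have e3 := size_rem xin.
    have e4 : (0 < size ls)%N by case: (ls) xin.
    move: hsum; rewrite hsplit e2 e3 [size (g :: gs)]/=; lia.
  have [F' [hF' pF']] := IH (rem x ls) (Pre ++ (g.1 ++ X ++ g.2)) R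
     (fun y yin => hls y (mem_rem yin)) hsz hs2 hv2.
  exists (g.1 ++ X ++ g.2 ++ F'); split; first by rewrite -!catA in hF' *.
  have pls := perm_flatten (perm_map (fun y => nseq (cnt y) y) hperm).
  apply/seq.permP => p; move/seq.permP: pF' => /(_ p); move/seq.permP: pls => /(_ p).
  rewrite /= !count_cat => -> ->; rewrite /X; set a1 := count p (flatten [seq nseq (cnt y) y | y <- rem x ls]); set a2 := count p (flatten _). set c1 := count p g.1; set c2 := count p g.2; set c3 := count p (nseq _ _); lia.
have hv2 : valid ((Pre ++ gcat g) ++ flatten (map gcat gs) ++ R).
  by rewrite -catA.
have hs2 : ((\sum_(y <- ls) count (fun g0 => ~~ good y g0) gs) + size ls <= size gs)%N.
  move: hsum; rewrite hsplit.
  have -> : (\sum_(x <- ls) (~~ good x g : nat) = size ls)%N.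
    rewrite -sum1_size; apply: eq_big_seq => x xin.
    by move/hasPn: hno => /(_ x xin) /negbTE ->.
  have e4 : (0 < size ls)%N by case: (ls) lsn.
  rewrite [size (g :: gs)]/=; set S0 := (\sum_(y <- ls) _)%N; lia.
have [F' [hF' pF']] := IH ls (Pre ++ gcat g) R hls hsz hs2 hv2.
exists (gcat g ++ F'); split; first by rewrite -!catA in hF' *.
apply/seq.permP => p; move/seq.permP: pF' => /(_ p).
by rewrite /= !count_cat => ->; cset; lia.
Qed.


Definition dist (s : seq gT) := size (undup s).

Lemma dist_perm pool S q : perm_eq pool (S ++ q) -> (dist pool <= size S + dist q)%N.
Proof.
move=> hp; rewrite /dist -size_cat; apply: uniq_leq_size; first exact: undup_uniq.
move=> z; rewrite mem_undup (perm_mem hp) !mem_cat mem_undup; by [].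
Qed.

Lemma pick pool (Bad : seq gT) : (size Bad < dist pool)%N ->
  exists2 y, y \in pool & y \notin Bad.
Proof.
move=> h; case: (boolP (has (fun y => y \notin Bad) pool)) => [/hasP [y ? ?]|/hasPn hn].
  by exists y.
have : (dist pool <= size Bad)%N.
  apply: uniq_leq_size; first exact: undup_uniq.
  by move=> z; rewrite mem_undup => /hn; rewrite negbK.
by rewrite leqNgt h.
Qed.

Lemma phase2 : (0 < t)%N -> forall pool S, valid S ->
  exists R L, [/\ valid (S ++ R), perm_eq pool (R ++ L) & (dist L <= t)%N].
Proof.
move=> t0 pool; have [n le] := ubnP (size pool); elim: n pool le => // n IH pool le S hS.
case: (boolP (has (fun y => y \notin badv S) pool)) => [/hasP [y yin ybad]|/hasPn hn].
  have hS' := valid_rcons t0 hS ybad.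
  have hp0 : (0 < size pool)%N by case: (pool) yin.
  have hlt : (size (rem y pool) < n)%N by rewrite size_rem //; lia.
  have [R [L [hR hp hL]]] := IH (rem y pool) hlt _ hS'.
  exists (y :: R), L; split => //; first by rewrite -cat1s catA.
  apply: perm_trans (perm_to_rem yin) _; by rewrite /= perm_cons.
exists [::], pool; split => //; first by rewrite cats0.
rewrite -(size_badv S); apply: uniq_leq_size; first exact: undup_uniq.
by move=> z; rewrite mem_undup => /hn; rewrite negbK.
Qed.


Definition Uof (gs : seq (seq gT * seq gT)) : seq gT :=
  flatten [seq [seq prd (take j g.2) * prd (drop (size g.1 - k) g.1)
     | j <- iota 0 t, k <- iota 0 t] | g <- gs].

Lemma size_Uof gs : size (Uof gs) = (size gs * (t * t))%N.
Proof.
elim: gs => [|g gs IH] //=; rewrite size_cat size_allpairs size_iota.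
by rewrite /Uof in IH; rewrite IH mulSn.
Qed.

Lemma inC_U z g gs : g \in gs -> inC z g -> z \in Uof gs.
Proof.
move=> gin /hasP [j jin /hasP [k kin /andP [_ /eqP e]]].
apply/flattenP; exists [seq prd (take j g.2) * prd (drop (size g.1 - k) g.1)
     | j <- iota 0 t, k <- iota 0 t]; first by apply/mapP; exists g.
by apply/allpairsP; exists (j, k).
Qed.

Definition extA (U A : seq gT) :=
  [seq (prd (drop (size A - k) A))^-1 * u | k <- iota 0 t, u <- U].
Definition extB (U A B : seq gT) :=
  [seq (prd B)^-1 * u * (prd (drop (size A - k) A))^-1 | k <- iota 0 t, u <- U].

Definition sufOK (U A : seq gT) := forall k, (0 < k)%N -> (k < t)%N -> (k <= size A)%N ->
  prd (drop (size A - k) A) \notin U.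
Definition Bok (U A B : seq gT) := forall j k, (0 < j)%N -> (j < t)%N -> (j <= size B)%N ->
  (k < t)%N -> (k <= size A)%N -> prd (take j B) * prd (drop (size A - k) A) \notin U.

Lemma buildA (U S : seq gT) : (0 < t)%N -> valid S -> forall n pool,
  (n + t + t * size U <= dist pool)%N ->
  exists A pool', [/\ size A = n, valid (S ++ A), sufOK U A & perm_eq pool (A ++ pool')].
Proof.
move=> t0 hS; elim=> [|n IH] pool hd.
  exists [::], pool; split => //; first by rewrite cats0.
  by move=> k k0 _ /=; lia.
have [A [p1 [sA hA hsA hp]]] := IH pool ltac:(lia).
have hd1 := dist_perm hp.
have hsz : (size (badv (S ++ A) ++ extA U A) < dist p1)%N.
  rewrite size_cat size_badv size_allpairs size_iota. move: hd hd1; rewrite sA; set m := (t * size U)%N; lia.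
have [y yin yn] := pick hsz.
rewrite mem_cat negb_or in yn; case/andP: yn => yv ye.
exists (A ++ [:: y]), (rem y p1); split.
- by rewrite size_cat sA addn1.
- by rewrite catA; apply: valid_rcons.
- move=> k k0 kt; rewrite size_cat /= => kA.
  rewrite drop_catl; last lia.
  have -> : (size A + 1 - k = size A - k.-1)%N by lia.
  rewrite prd_cat prd_cons prd_nil mulg1; apply: contra ye => hu.
  apply/allpairsP; exists (k.-1, prd (drop (size A - k.-1) A) * y) => /=.
  split => //; first by rewrite mem_iota; lia.
  by rewrite mulKg.
- apply: perm_trans hp _; rewrite -catA perm_cat2l /=.
  exact: perm_to_rem.
Qed.

Lemma buildB (U T0 A : seq gT) : (0 < t)%N -> valid T0 -> forall n pool,
  (n + t + t * size U <= dist pool)%N ->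
  exists B pool', [/\ size B = n, valid (T0 ++ B), Bok U A B & perm_eq pool (B ++ pool')].
Proof.
move=> t0 hS; elim=> [|n IH] pool hd.
  exists [::], pool; split => //; first by rewrite cats0.
  by move=> j k j0 _ /=; lia.
have [B [p1 [sB hB hsB hp]]] := IH pool ltac:(lia).
have hd1 := dist_perm hp.
have hsz : (size (badv (T0 ++ B) ++ extB U A B) < dist p1)%N.
  rewrite size_cat size_badv size_allpairs size_iota. move: hd hd1; rewrite sB; set m := (t * size U)%N; lia.
have [y yin yn] := pick hsz.
rewrite mem_cat negb_or in yn; case/andP: yn => yv ye.
exists (B ++ [:: y]), (rem y p1); split.
- by rewrite size_cat sB addn1.
- by rewrite catA; apply: valid_rcons.
- move=> j k j0 jt; rewrite size_cat /= => jB kt kA.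
  case: (leqP j (size B)) => hj.
    by rewrite takel_cat //; apply: hsB.
  rewrite take_oversize ?size_cat /=; last lia.
  rewrite prd_cat prd_cons prd_nil mulg1; apply: contra ye => hu.
  apply/allpairsP; exists (k, prd B * y * prd (drop (size A - k) A)) => /=.
  split => //; first by rewrite mem_iota; lia.
  by rewrite mulgA mulKg mulgK.
- apply: perm_trans hp _; rewrite -catA perm_cat2l /=.
  exact: perm_to_rem.
Qed.


Lemma build_gap (U S : seq gT) pool : (0 < t)%N -> valid S ->
  (3 * t + t * size U <= dist pool)%N ->
  exists A B pool', [/\ size A = t, size B = t, valid (S ++ A ++ B),
    (forall z, inC z (A, B) -> z \notin U) & perm_eq pool (A ++ B ++ pool')].
Proof.
move=> t0 hS hd.
have hd0 : (t + t + t * size U <= dist pool)%N.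
  move: hd; set m := (t * size U)%N; lia.
have [A [p1 [sA hA hsA hp1]]] := buildA (U := U) t0 hS hd0.
have hd1 := dist_perm hp1.
have hd2 : (t + t + t * size U <= dist p1)%N.
  move: hd hd1; rewrite sA; set m := (t * size U)%N; lia.
have [B [p2 [sB hB hsB hp2]]] := buildB (U := U) A t0 hA hd2.
exists A, B, p2; split => //; first by rewrite catA.
  move=> z /hasP [j jin /hasP [k kin /andP [jk /eqP <-]]] /=.
  move: jin kin; rewrite !mem_iota => /andP [_ jt] /andP [_ kt].
  case: j jk jt => [|j] jk jt.
    rewrite take0 prd_nil mul1g; apply: hsA; lia.
  apply: hsB; lia.
apply: perm_trans hp1 _; rewrite perm_cat2l; exact: hp2.
Qed.

Lemma size_flat_gaps gs : all (fun g => (size g.1 == t) && (size g.2 == t)) gs ->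
  size (flatten (map gcat gs)) = (size gs * (2 * t))%N.
Proof.
elim: gs => [|g gs IH] //= /andP [/andP [/eqP h1 /eqP h2] h].
by rewrite size_cat IH // /gcat size_cat h1 h2 mulSn; lia.
Qed.

Lemma phase1 : (0 < t)%N -> forall P pool,
  (P * (3 * t) + t * (P * (t * t)) <= dist pool)%N ->
  exists gs pool', [/\ size gs = P,
    all (fun g => (size g.1 == t) && (size g.2 == t)) gs,
    valid (flatten (map gcat gs)),
    (forall z, count (inC z) gs <= 1)%N &
    perm_eq pool (flatten (map gcat gs) ++ pool')].
Proof.
move=> t0; elim=> [|P IH] pool hd.
  exists [::], pool; split => //; move=> i k k0 _ /=; lia.
have hP : (P * (3 * t) + t * (P * (t * t)) <= P.+1 * (3 * t) + t * (P.+1 * (t * t)))%N.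
  by apply: leq_add; rewrite ?leq_mul2l ?leq_mul2r ?leqnSn ?orbT.
have [gs [p1 [sgs hsz hv hc hp]]] := IH pool (leq_trans hP hd).
have hd1 := dist_perm hp.
rewrite size_flat_gaps // in hd1.
have hd2 : (3 * t + t * size (Uof gs) <= dist p1)%N.
  rewrite size_Uof sgs.
  have e : (P.+1 * (3 * t) + t * (P.+1 * (t * t)) =
            P * (2 * t) + (3 * t + t * (P * (t * t))) + (P * t + t * (t * t)))%N.
    nia.
  move: hd hd1; rewrite e sgs.
  set m1 := (P * (2 * t))%N; set m2 := (t * (P * (t * t)))%N; lia.
have [A [B [p2 [sA sB hv2 hU hp2]]]] := build_gap t0 hv hd2.
exists (gs ++ [:: (A, B)]), p2; split.
- by rewrite size_cat sgs addn1.
- by rewrite all_cat hsz /= sA sB !eqxx.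
- by rewrite map_cat flatten_cat /= cats0 /gcat /=.
- move=> z; rewrite count_cat /=.
  case: (boolP (inC z (A, B))) => hz; last by rewrite addn0 addn0 hc.
  have : count (inC z) gs = 0%N.
    apply/eqP; rewrite -leqn0 leqNgt -has_count; apply/hasP => [[g gin hg]].
    by move: (hU z hz); rewrite (inC_U gin hg).
  by move=> ->.
- rewrite map_cat flatten_cat /= cats0 -catA.
  by apply: perm_trans hp _; rewrite perm_cat2l /gcat -catA.
Qed.

Lemma bad_count x gs : (forall z, count (inC z) gs <= 1)%N ->
  (count (fun g => ~~ good x g) gs <= t)%N.
Proof.
move=> hc.
have e : forall g, ~~ good x g = has (fun v => inC (x ^+ v)^-1 g) (iota 1 t).
  by move=> g; rewrite /good -has_predC; apply: eq_has => v /=; rewrite negbK.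
rewrite (eq_count e) -[X in (_ <= X)%N](size_iota 1 t).
elim: (iota 1 t) => [|v vs IH] /=.
  by rewrite (eq_count (a2 := pred0)) ?count_pred0.
have := count_predUI (fun g => inC (x ^+ v)^-1 g) (fun g => has (fun v => inC (x ^+ v)^-1 g) vs) gs.
rewrite (eq_count (a1 := predU _ _) (a2 := fun g => inC (x ^+ v)^-1 g || has (fun v => inC (x ^+ v)^-1 g) vs)) //.
have := hc (x ^+ v)^-1.
set a := count _ gs; set b := count _ gs; set c := count _ gs; set d := count _ gs.
lia.
Qed.

End Seqs.

Lemma mem_mset (gT : finGroupType) (a : seq gT) lam z :
  z \in mset_of a lam -> z \in a.
Proof.
elim: a lam => [|x a IH] [|l lam] //=.
rewrite /mset_of /= mem_cat => /orP [/nseqP [-> _]|h].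
  by rewrite inE eqxx.
by rewrite inE (IH lam h) orbT.
Qed.

Lemma in_mset (gT : finGroupType) (a : seq gT) lam z :
  size lam = size a -> all (fun l => 0 < l)%N lam -> z \in a -> z \in mset_of a lam.
Proof.
elim: a lam => [|x a IH] [|l lam] //= [sl] /andP [l0 hl].
rewrite inE /mset_of /= mem_cat => /orP [/eqP ->|h].
  by apply/orP; left; apply/nseqP.
by apply/orP; right; apply: IH.
Qed.

Lemma xok_G (gT : finGroupType) (G : {group gT}) t x :
  (t < pdiv #|G|)%N -> x \in G -> x != 1 -> xok t x.
Proof.
move=> ht xG x1 v v0 vt; apply/negP => /eqP h.
have d : (#[x] %| v)%N by rewrite order_dvdn h.
have o1 : (1 < #[x])%N by rewrite order_gt1.
have := pdiv_min_dvd o1 (order_dvdG xG).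
have := dvdn_leq v0 d.
lia.
Qed.

Lemma sum_le_const (T : Type) (s : seq T) (f : T -> nat) c :
  (forall x, f x <= c)%N -> (\sum_(x <- s) f x <= size s * c)%N.
Proof.
move=> h; elim: s => [|x s IH]; first by rewrite big_nil.
by rewrite big_cons /= mulSn leq_add.
Qed.

Theorem theorem2p5 :
  forall t : nat, (0 < t)%N ->
  exists Nt : nat,
    forall (gT : finGroupType) (G : {group gT}) (a : seq gT) (lam : seq nat),
      (t < pdiv #|G|)%N ->
      uniq a ->
      size lam = size a ->
      all (fun l => 0 < l)%N lam ->
      all (fun x => (x \in G) && (x != 1)) a ->
      (Nt <= size a)%N ->
      t_weakly_sequenceable t (mset_of a lam).
Proof.
move=> t t0.
set P := (t * t + t)%N.
exists (P * (3 * t) + t * (P * (t * t)))%N.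
move=> gT G a lam hp ua sl lpos ain hN.
set pool := mset_of a lam.
have memp : forall z, z \in pool -> (z \in G) /\ (z != 1).
  move=> z /mem_mset za; move/allP: ain => /(_ z za) /andP [] //.
have dpool : (size a <= dist pool)%N.
  apply: uniq_leq_size => // z za; rewrite mem_undup; exact: in_mset.
have [gs [p1 [sgs hsz hv hc hp1]]] := phase1 t0 (pool := pool) (leq_trans hN dpool).
have [R [L [hR hp2 hL]]] := phase2 t0 p1 hv.
have hls : forall x, x \in undup L -> (0 < count_mem x L)%N /\ xok t x.
  move=> x; rewrite mem_undup => xL; split; first by rewrite -has_pred1 has_count in xL.
  have xp1 : x \in p1 by rewrite (perm_mem hp2) mem_cat xL orbT.
  have xp : x \in pool by rewrite (perm_mem hp1) mem_cat xp1 orbT.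
  have [xG x1] := memp x xp.
  exact: xok_G hp xG x1.
have hsum : ((\sum_(x <- undup L) count (fun g => ~~ good t x g) gs) + size (undup L) <= size gs)%N.
  have h1 := sum_le_const (undup L) (fun x => bad_count x hc).
  have h2 : (size (undup L) * t <= t * t)%N by rewrite leq_mul2r hL orbT.
  rewrite sgs /P; move: hL; rewrite /dist => hL.
  move: h1 h2; set s1 := (\sum_(x <- undup L) _)%N; set m1 := (size (undup L) * t)%N.
  lia.
have hv3 : valid t ([::] ++ flatten (map (@gcat gT) gs) ++ R) by [].
have [F [hF pF]] := phase3 hls hsz hsum hv3.
exists (F ++ R); split.
  have pc := perm_count_undup L.
  apply/seq.permP => p.
  move/seq.permP: pF => /(_ p); move/seq.permP: pc => /(_ p).
  move/seq.permP: hp1 => /(_ p); move/seq.permP: hp2 => /(_ p).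
  rewrite !count_cat => e1 e2 e3 e4.
  rewrite e4 e3 e2; cset; lia.
move=> i j ij jy jit.
rewrite /psum.
have e : take j (F ++ R) = take i (F ++ R) ++ take (j - i) (drop i (F ++ R)).
  by rewrite -takeD subnKC // ltnW.
rewrite e big_cat /=.
have h1 : (0 < j - i)%N by lia.
have h2 : (i + (j - i) <= size (F ++ R))%N by lia.
have := hF i (j - i) h1 jit h2.
rewrite /prd; apply: contra => /eqP h.
by rewrite -(mulKg (\prod_(x <- take i (F ++ R)) x) (\prod_(x <- _) x)) -h mulVg.
Qed.
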